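(* Let $R,S$ be outer univalent multirelations $X\leftrightarrow\mathcal{P}Y$. Then $R\sqsubseteq_\uparrow S\iff R\Cup S=S$ and $R\sqsubseteq_\downarrow S\iff R\Cap S=R$.
   Context: $R\Cup S=\{(a,A\cup B)\mid (a,A)\in R,(a,B)\in S\}$, $R\Cap S=\{(a,A\cap B)\mid (a,A)\in R,(a,B)\in S\}$. $R^{\uparrow}=\{(a,A)\mid\exists B.(a,B)\in R\wedge B\subseteq A\}$, $R^{\downarrow}=\{(a,A)\mid\exists B.(a,B)\in R\wedge A\subseteq B\}$; $R\sqsubseteq_\uparrow S\iff S\subseteq R^{\uparrow}$; $R\sqsubseteq_\downarrow S\iff R\subseteq S^{\downarrow}$. $R$ is outer univalent if for each $a\in X$ there is at most one $B$ with $(a,B)\in R$. *)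

(* Defs.v *)
From mathcomp Require Import all_boot.
From mathcomp Require Import boolp classical_sets.
Set Implicit Arguments. Unset Strict Implicit. Unset Printing Implicit Defensive.
Local Open Scope classical_set_scope.

Definition mrel (X Y : Type) := set (X * set Y).

Definition mcup X Y (R S : mrel X Y) : mrel X Y :=
  [set p | exists A B, R (p.1, A) /\ S (p.1, B) /\ p.2 = A `|` B].

Definition mcap X Y (R S : mrel X Y) : mrel X Y :=
  [set p | exists A B, R (p.1, A) /\ S (p.1, B) /\ p.2 = A `&` B].

Definition mup X Y (R : mrel X Y) : mrel X Y :=
  [set p | exists B, R (p.1, B) /\ B `<=` p.2].
Definition mdown X Y (R : mrel X Y) : mrel X Y :=
  [set p | exists B, R (p.1, B) /\ p.2 `<=` B].

Definition le_up X Y (R S : mrel X Y) : Prop := S `<=` mup R.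
Definition le_down X Y (R S : mrel X Y) : Prop := R `<=` mdown S.

Definition outer_univalent X Y (R : mrel X Y) : Prop :=
  forall a B C, R (a, B) -> R (a, C) -> B = C.

(* Main.v *)
Require Import Defs.
From mathcomp Require Import all_boot.
From mathcomp Require Import boolp classical_sets.
Local Open Scope classical_set_scope.

Theorem lemma5p9 (X Y : Type) (R S : mrel X Y) :
  outer_univalent R -> outer_univalent S ->
  (le_up R S <-> mcup R S = S) /\ (le_down R S <-> mcap R S = R).
Proof.
move=> uR uS; split; split.
- move=> H; apply/seteqP; split.
  + move=> [a C] [A [B [RA [SB /= ->]]]].
    have [B' [RB' sB]] := H (a, B) SB.
    have EA : A = B' := uR _ _ _ RA RB'.
    by rewrite setUidr // EA.
  + move=> [a B] SB.
    have [B' [RB' sB]] := H (a, B) SB.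
    by exists B', B; split => //; split => //=; rewrite setUidr.
- move=> E [a A] SA.
  rewrite -E in SA; move: SA => [A1 [B1 [RA1 [SB1 /= EA]]]].
  have SA' : S (a, A) by rewrite -E; exists A1, B1.
  exists A1; split => //=.
  rewrite EA; exact: subsetUl.
- move=> H; apply/seteqP; split.
  + move=> [a C] [A [B [RA [SB /= ->]]]].
    have [B' [SB' sB]] := H (a, A) RA.
    have EB : B = B' := uS _ _ _ SB SB'.
    by rewrite setIidl // EB.
  + move=> [a A] RA.
    have [B' [SB' sB]] := H (a, A) RA.
    by exists A, B'; split => //; split => //=; rewrite setIidl.
- move=> E [a A] RA.
  rewrite -E in RA; move: RA => [A1 [B1 [RA1 [SB1 /= EA]]]].
  exists B1; split => //=.
  rewrite EA; exact: subIsetr.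
Qed.
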